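(* Let $P,Q$ be finite posets, $R$ an indecomposable commutative unital ring, $\Phi:I^3(P,R)\to I^3(Q,R)$ an $R$-linear algebra isomorphism, and $\varphi:P\to Q$ the bijection such that $\Phi(e_x)-e_{\varphi(x)}\in J^3_1(Q,R)$ for all $x\in P$ (such a bijection exists and is unique). Then for all $x<y$ in $P$ with $l(x,y)=1$ we have $\varphi(x)<\varphi(y)$ and $$\Phi(e_{xxy}+e_{xyy})=e_{\varphi(x)\varphi(x)\varphi(y)}+e_{\varphi(x)\varphi(y)\varphi(y)}+\sigma_{xy}$$ for some $\sigma_{xy}\in J^3_2(Q,R)$.
   Context: A commutative ring is indecomposable if its only idempotents are $0$ and $1$. For a finite poset $P$, $P^3_\le=\{(x,y,z)\in P^3: x\le y\le z\}$, and $I^3(P,R)$ is the $R$-module of functions $f:P^3_\le\to R$ with multiplication $(fg)(x_1,x_2,x_3)=\sum f(x_1,y_1,y_2)g(y_1,y_2,x_3)$ over all $x_1\le y_1\le x_2\le y_2\le x_3$. For $x\le y\le z$, $e_{xyz}$ is the function equal to $1$ at $(x,y,z)$ and $0$ elsewhere, and $e_x:=e_{xxx}$. For $a\le b$, $l(a,b)$ is the maximum of $|C|-1$ over chains $C$ in the interval $[a,b]$. $J^3_k(Q,R)=\{f\in I^3(Q,R): f(x_1,x_2,x_3)=0 \text{ whenever } l(x_1,x_3)<k\}$. *)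

(* Defs.v *)
From HB Require Import structures.
From mathcomp Require Import all_boot all_order all_algebra.
Set Implicit Arguments. Unset Strict Implicit. Unset Printing Implicit Defensive.
Import Order.TTheory GRing.Theory.
Local Open Scope ring_scope.

Section Defs.
Variables (d : Order.disp_t) (P : finPOrderType d) (R : comNzRingType).

Definition is_chain3 (t : P * P * P) : bool :=
  ((t.1.1 <= t.1.2)%O && (t.1.2 <= t.2)%O).
Definition chain3 := {t : P * P * P | is_chain3 t}.

Local Notation I3 := {ffun chain3 -> R^o}.

(* value of f at (x,y,z), 0 if (x,y,z) is not in P^3_<= *)
Definition app3 (f : I3) (x y z : P) : R :=
  if insub (x, y, z) is Some t then f t else 0.

Definition mul3 (f g : I3) : I3 :=
  [ffun t : chain3 =>
     let: (x1, x2, x3) := val t in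
     \sum_(y1 : P) \sum_(y2 : P | [&& (x1 <= y1)%O, (y1 <= x2)%O,
                                     (x2 <= y2)%O & (y2 <= x3)%O])
        app3 f x1 y1 y2 * app3 g y1 y2 x3].

Definition e3 (x y z : P) : I3 :=
  [ffun t : chain3 => if val t == (x, y, z) then 1 else 0].

Definition chain_in (a b : P) (C : {set P}) : bool :=
  [forall u in C, (a <= u)%O && (u <= b)%O] &&
  [forall u in C, forall v in C, (u <= v)%O || (v <= u)%O].

Definition lenP (a b : P) : nat :=
  \max_(C : {set P} | chain_in a b C) (#|C|.-1).

Definition J3 (k : nat) (f : I3) : Prop :=
  forall t : chain3, (lenP (val t).1.1 (val t).2 < k)%N -> f t = 0.

End Defs.

Notation I3 P R := {ffun chain3 P -> R^o}.

Definition indecomposable (R : comNzRingType) : Prop :=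
  forall e : R, e * e = e -> e = 0 \/ e = 1.

(* Main.v *)
Require Import Defs.
From HB Require Import structures.
From mathcomp Require Import all_boot all_order all_algebra.
Set Implicit Arguments. Unset Strict Implicit. Unset Printing Implicit Defensive.
Import Order.TTheory GRing.Theory.
Local Open Scope ring_scope.

Section Infra.
Variables (d : Order.disp_t) (P : finPOrderType d) (R : comNzRingType).
Implicit Types (f g h : I3 P R) (a b c x y z q m : P).

Lemma app3_val f (t : chain3 P) : app3 f (val t).1.1 (val t).1.2 (val t).2 = f t.
Proof. by case: t => [[[a b] c] H]; rewrite /app3 /= -[(a,b,c)]/(val (exist _ (a,b,c) H)) valK. Qed.

Lemma app3_nc f a b c : ~~ ((a <= b)%O && (b <= c)%O) -> app3 f a b c = 0.
Proof. by move=> H; rewrite /app3 insubN. Qed.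

Lemma app3D f g a b c : app3 (f + g) a b c = app3 f a b c + app3 g a b c.
Proof. by rewrite /app3; case: insub => [t|]; rewrite ?ffunE ?addr0. Qed.

Lemma app3N f a b c : app3 (- f) a b c = - app3 f a b c.
Proof. by rewrite /app3; case: insub => [t|]; rewrite ?ffunE ?oppr0. Qed.

Lemma app3B f g a b c : app3 (f - g) a b c = app3 f a b c - app3 g a b c.
Proof. by rewrite app3D app3N. Qed.

Lemma app30 a b c : app3 (0 : I3 P R) a b c = 0.
Proof. by rewrite /app3; case: insub => [t|]; rewrite ?ffunE. Qed.

Lemma app3Z (r : R) f a b c : app3 (r *: f) a b c = r * app3 f a b c.
Proof. by rewrite /app3; case: insub => [t|]; rewrite ?ffunE ?mulr0. Qed.

Lemma app3_sum (I : finType) (F : I -> I3 P R) a b c :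
  app3 (\sum_i F i) a b c = \sum_i app3 (F i) a b c.
Proof.
apply: (big_morph (fun f => app3 f a b c)) => [f g|]; [exact: app3D|exact: app30].
Qed.

Lemma app3_e3 x y z a b c : app3 (e3 R x y z) a b c =
  if [&& a == x, b == y, c == z & (x <= y)%O && (y <= z)%O] then 1 else 0.
Proof.
rewrite /app3; case: insubP => [t Ht Hv|Hn].
  rewrite ffunE Hv !xpair_eqE; move: Ht; rewrite /is_chain3 /=.
  case: (eqVneq a x) => [->|]; case: (eqVneq b y) => [->|]; case: (eqVneq c z) => [->|] //=;
  by rewrite ?eqxx /= ?andbF //; move=> ->.
move: Hn; rewrite /is_chain3 /=.
case: (eqVneq a x) => [->|]; case: (eqVneq b y) => [->|]; case: (eqVneq c z) => [->|] //=;
by move=> /negbTE ->.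
Qed.

Lemma ext3 f g : (forall a b c, (a <= b)%O -> (b <= c)%O -> app3 f a b c = app3 g a b c) -> f = g.
Proof.
move=> H; apply/ffunP => t; rewrite -!app3_val.
by case: t => [[[a b] c] /= /andP [H1 H2]]; apply: H.
Qed.

Lemma mul3E f g a b c : (a <= b)%O -> (b <= c)%O ->
  app3 (mul3 f g) a b c = \sum_(y1 : P) \sum_(y2 : P | [&& (a <= y1)%O, (y1 <= b)%O,
                                     (b <= y2)%O & (y2 <= c)%O]) app3 f a y1 y2 * app3 g y1 y2 c.
Proof.
move=> H1 H2; have Hc : is_chain3 (a,b,c) by rewrite /is_chain3 /= H1 H2.
by rewrite /app3 (insubT _ Hc) ffunE.
Qed.


Lemma mulE_l a b c g x1 x2 x3 : (a <= b)%O -> (b <= c)%O -> (x1 <= x2)%O -> (x2 <= x3)%O ->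
 app3 (mul3 (e3 R a b c) g) x1 x2 x3 =
   if [&& x1 == a, (b <= x2)%O & (x2 <= c)%O] then app3 g b c x3 else 0.
Proof.
move=> Hab Hbc H1 H2; rewrite mul3E //.
rewrite (bigD1 b) //= [X in _ + X]big1 ?addr0; last first.
  by move=> y1 Hy1; apply: big1 => y2 _; rewrite app3_e3 (negbTE Hy1) /= andbF mul0r.
rewrite big_mkcond (bigD1 c) //= [X in _ + X]big1 ?addr0; last first.
  by move=> y2 Hy2; case: ifP => // _; rewrite app3_e3 (negbTE Hy2) /= !andbF mul0r.
rewrite app3_e3 !eqxx Hab Hbc /= andbT.
case: (eqVneq x1 a) => [->|] /=; last by rewrite mul0r; case: ifP.
rewrite Hab mul1r; case: (boolP (b <= x2)%O) => //= Hbx2; case: (boolP (x2 <= c)%O) => //= Hx2c.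
by case: (boolP (c <= x3)%O) => // Hc; rewrite app3_nc // Hbc.
Qed.

Lemma mulE_r a b c f x1 x2 x3 : (a <= b)%O -> (b <= c)%O -> (x1 <= x2)%O -> (x2 <= x3)%O ->
 app3 (mul3 f (e3 R a b c)) x1 x2 x3 =
   if [&& x3 == c, (a <= x2)%O & (x2 <= b)%O] then app3 f x1 a b else 0.
Proof.
move=> Hab Hbc H1 H2; rewrite mul3E //.
rewrite (bigD1 a) //= [X in _ + X]big1 ?addr0; last first.
  by move=> y1 Hy1; apply: big1 => y2 _; rewrite app3_e3 (negbTE Hy1) /= mulr0.
rewrite big_mkcond (bigD1 b) //= [X in _ + X]big1 ?addr0; last first.
  by move=> y2 Hy2; case: ifP => // _; rewrite app3_e3 (negbTE Hy2) /= !andbF mulr0.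
rewrite app3_e3 !eqxx Hab Hbc /= !andbT.
case: (eqVneq x3 c) => [->|] /=; last by rewrite mulr0; case: ifP.
rewrite Hbc mulr1 !andbT; case: (boolP (a <= x2)%O) => //= Hax2; case: (boolP (x2 <= b)%O) => //= Hx2b.
all: rewrite ?andbT ?andbF //; by case: (boolP (x1 <= a)%O) => // Hc; rewrite app3_nc // (negbTE Hc).
Qed.

Definition cover a c := (a < c)%O && [forall m : P, ((a <= m)%O && (m <= c)%O) ==> (m == a) || (m == c)].

Lemma coverP a c : cover a c -> forall m, (a <= m)%O -> (m <= c)%O -> m = a \/ m = c.
Proof.
by case/andP => _ /forallP H m H1 H2; move: (H m); rewrite H1 H2 /= => /orP [] /eqP; auto.
Qed.

Lemma cover_lt a c : cover a c -> (a < c)%O.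
Proof. by case/andP. Qed.

Lemma M0 f g q : app3 (mul3 f g) q q q = app3 f q q q * app3 g q q q.
Proof.
rewrite mul3E // (bigD1 q) //= [X in _ + X]big1 ?addr0; last first.
  move=> y1 Hy1; apply: big1 => y2 /and4P [H1 H2 _ _].
  by case/eqP: Hy1; apply: le_anti; rewrite H1 H2.
rewrite (bigD1 q) ?lexx //= [X in _ + X]big1 ?addr0 //.
move=> y2 /andP [/andP [H1 H2] Hy2].
by case/eqP: Hy2; apply: le_anti; rewrite H1 H2.
Qed.

Lemma M1 f g a c : cover a c ->
  app3 (mul3 f g) a a c = app3 f a a a * app3 g a a c + app3 f a a c * app3 g a c c.
Proof.
move=> Hc; have Hac := ltW (cover_lt Hc).
rewrite mul3E // (bigD1 a) //= [X in _ + X]big1 ?addr0; last first.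
  move=> y1 Hy1; apply: big1 => y2 /and4P [H1 H2 _ _].
  by case/eqP: Hy1; apply: le_anti; rewrite H1 H2.
rewrite (bigD1 a) /= ?lexx ?Hac // (bigD1 c) /= ?lexx ?Hac ?(gt_eqF (cover_lt Hc)) //.
rewrite [X in _ + (_ + X)]big1 ?addr0 //.
move=> y2 /andP [/andP [/andP [H1 H2] Hy2] Hy2'].
by case: (coverP Hc H1 H2) => E; [move: Hy2|move: Hy2']; rewrite E eqxx.
Qed.

Lemma M2 f g a c : cover a c ->
  app3 (mul3 f g) a c c = app3 f a a c * app3 g a c c + app3 f a c c * app3 g c c c.
Proof.
move=> Hc; have Hac := ltW (cover_lt Hc); have Hne := gt_eqF (cover_lt Hc).
rewrite mul3E // (bigD1 a) // (bigD1 c) /= ?Hne // [X in _ + (_ + X)]big1 ?addr0; last first.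
  move=> y1 /andP [Hy1 Hy1']; apply: big1 => y2 /and4P [H1 H2 _ _].
  by case: (coverP Hc H1 H2) => E; [move: Hy1|move: Hy1']; rewrite E eqxx.
rewrite (big_pred1 c); last by move=> y2 /=; rewrite lexx Hac /= -eq_le eq_sym.
rewrite (big_pred1 c); last by move=> y2 /=; rewrite lexx Hac /= -eq_le eq_sym.
by [].
Qed.

Lemma mul3Dl f g h : mul3 (f + g) h = mul3 f h + mul3 g h.
Proof.
apply: ext3 => a b c H1 H2; rewrite app3D !mul3E // -big_split /=.
by apply: eq_bigr => y1 _; rewrite -big_split /=; apply: eq_bigr => y2 _; rewrite app3D mulrDl.
Qed.


Definition lowpos a b c : Prop := (a = b /\ b = c) \/ (cover a c /\ (b = a \/ b = c)).
Definition LZ h := forall a b c, lowpos a b c -> app3 h a b c = 0.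

Lemma lp_d q : lowpos q q q. Proof. by left. Qed.
Lemma lp_l a c : cover a c -> lowpos a a c. Proof. by right; split => //; left. Qed.
Lemma lp_r a c : cover a c -> lowpos a c c. Proof. by right; split => //; right. Qed.

Lemma LZ_mulr f g : LZ g -> LZ (mul3 f g).
Proof.
move=> Hg a b c [[<- <-]|[Hc [->|->]]]; [rewrite M0 | rewrite M1 // | rewrite M2 //].
- by rewrite Hg ?mulr0 //; apply: lp_d.
- by rewrite !Hg ?mulr0 ?addr0 //; [apply: lp_r|apply: lp_l].
- by rewrite !Hg ?mulr0 ?addr0 //; [apply: lp_d|apply: lp_r].
Qed.

Lemma LZ_mull f g : LZ f -> LZ (mul3 f g).
Proof.
move=> Hg a b c [[<- <-]|[Hc [->|->]]]; [rewrite M0 | rewrite M1 // | rewrite M2 //].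
- by rewrite Hg ?mul0r //; apply: lp_d.
- by rewrite !Hg ?mul0r ?addr0 //; [apply: lp_l|apply: lp_d].
- by rewrite !Hg ?mul0r ?addr0 //; [apply: lp_r|apply: lp_l].
Qed.

Lemma lenP_refl q : lenP q q = 0%N.
Proof.
apply/eqP; rewrite -leqn0; apply/bigmax_leqP => C /andP [/forall_inP H _].
have : C \subset [set q].
  apply/subsetP => u /H /andP [H1 H2]; rewrite inE; apply/eqP/le_anti; by rewrite H2 H1.
by move/subset_leq_card; rewrite cards1; case: #|C| => [|[|]].
Qed.

Lemma lenP_ge2 a m c : (a < m)%O -> (m < c)%O -> (2 <= lenP a c)%N.
Proof.
move=> H1 H2; have Hac := lt_trans H1 H2.
pose C := a |: (m |: [set c]).
have Hch : chain_in a c C.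
  apply/andP; split; apply/forall_inP => u; rewrite !inE => /or3P [] /eqP ->;
  rewrite ?lexx ?(ltW H1) ?(ltW H2) ?(ltW Hac) //;
  apply/forall_inP => v; rewrite !inE => /or3P [] /eqP ->;
  by rewrite ?lexx ?(ltW H1) ?(ltW H2) ?(ltW Hac) ?orbT.
apply: leq_trans (leq_bigmax_cond _ Hch).
by rewrite !cardsU1 cards1 !inE (lt_eqF H1) (lt_eqF Hac) (lt_eqF H2).
Qed.

Lemma low_of_lenP a b c : (a <= b)%O -> (b <= c)%O -> (lenP a c < 2)%N -> lowpos a b c.
Proof.
move=> H1 H2 Hl; have Hac := le_trans H1 H2.
case: (eqVneq a c) => [Eac|Nac].
  subst; left; suff E : c = b by subst.
  by apply/le_anti; rewrite H1 H2.
have Hlt : (a < c)%O by rewrite lt_neqAle Nac Hac.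
have Hcov : cover a c.
  rewrite /cover Hlt; apply/forallP => m; apply/implyP => /andP [Ham Hmc].
  case: (eqVneq m a) => //= Hma; case: (eqVneq m c) => //= Hmc'.
  have := @lenP_ge2 a m c; rewrite lt_neqAle eq_sym Hma Ham lt_neqAle Hmc' Hmc => /(_ isT isT).
  by rewrite leqNgt Hl.
by right; split => //; have [E|E] := coverP Hcov H1 H2; [left|right].
Qed.

Lemma lenP_cover x y : (x < y)%O -> lenP x y = 1%N -> cover x y.
Proof.
move=> Hxy Hl; have Hl2 : (lenP x y < 2)%N by rewrite Hl.
have [[_ E]|[]//] := low_of_lenP (lexx x) (ltW Hxy) Hl2.
by move: Hxy; rewrite E ltxx.
Qed.

Lemma J3P k f : J3 k f -> forall a b c, (a <= b)%O -> (b <= c)%O -> (lenP a c < k)%N ->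
  app3 f a b c = 0.
Proof.
move=> H a b c H1 H2 Hl; have Hc : is_chain3 (a,b,c) by rewrite /is_chain3 /= H1 H2.
by rewrite /app3 (insubT _ Hc); apply: H.
Qed.

Lemma LZ_J3 f : LZ f -> J3 2 f.
Proof.
move=> H t; rewrite -app3_val; case: t => [[[a b] c] /= /andP[H1 H2]] Hl.
by apply: H; exact: low_of_lenP.
Qed.

Lemma decomp f : f = \sum_(t : chain3 P) f t *: e3 R (val t).1.1 (val t).1.2 (val t).2.
Proof.
apply/ffunP => t; rewrite sum_ffunE (bigD1 t) //= [X in _ + X]big1 ?addr0.
  rewrite ffunE ffunE; case: t => [[[a b] c] H] /=; rewrite eqxx.
  exact: (esym (mulr1 _)).
move=> t' Ht'; rewrite ffunE ffunE; case: ifP; last by move=> _; exact: mulr0.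
move=> /eqP E; case/eqP: Ht'; apply: val_inj; rewrite E.
by case: t' {E} => [[[a b] c] H].
Qed.


Lemma e3_mul_zr a b c z : b != c -> mul3 (e3 R a b c) (e3 R z z z) = 0.
Proof.
move=> Hbc; apply: ext3 => x1 x2 x3 H1 H2; rewrite mulE_r ?lexx // app30 app3_e3.
case: ifP => // _; case: (eqVneq z b) => [E|] /=; last by rewrite andbF.
by subst; rewrite (negbTE Hbc) /= !andbF.
Qed.

Lemma e3_mul_zl a b c z : a != b -> mul3 (e3 R z z z) (e3 R a b c) = 0.
Proof.
move=> Hab; apply: ext3 => x1 x2 x3 H1 H2; rewrite mulE_l ?lexx // app30 app3_e3.
case: ifP => // _; case: (eqVneq z a) => [E|] //=.
by subst; rewrite (negbTE Hab).
Qed.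

Lemma dec_l a m c x1 x2 x3 : (a < m)%O -> (m < c)%O -> (x1 <= x2)%O -> (x2 <= x3)%O ->
  app3 (mul3 (e3 R a a m) (e3 R a m c) - e3 R a a c) x1 x2 x3 != 0 -> x1 != x2 /\ x2 != x3.
Proof.
move=> Ham Hmc H1 H2; have Hac := lt_trans Ham Hmc.
rewrite app3B mulE_l ?lexx ?(ltW Ham) // !app3_e3 !eqxx ?lexx ?(ltW Ham) ?(ltW Hmc) ?(ltW Hac) /= !andbT.
case: (eqVneq x1 a) => [E|N] /=; last by rewrite subrr eqxx.
subst x1; case: (eqVneq x2 a) => [E|N] /=.
  by subst x2; rewrite lexx (ltW Ham) /=; case: (x3 == c) => /=; rewrite subrr eqxx.
case: ifP => [/andP [_ Hx2m]|_]; case: (eqVneq x3 c) => [E|] /=; rewrite ?subr0 ?subrr ?eqxx //.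
  move=> _; split => //; subst x3; apply/eqP => E; subst x2; move: (le_lt_trans Hx2m Hmc); rewrite ltxx.
by [].
Qed.

Lemma dec_r a m c x1 x2 x3 : (a < m)%O -> (m < c)%O -> (x1 <= x2)%O -> (x2 <= x3)%O ->
  app3 (mul3 (e3 R a m c) (e3 R m c c) - e3 R a c c) x1 x2 x3 != 0 -> x1 != x2 /\ x2 != x3.
Proof.
move=> Ham Hmc H1 H2; have Hac := lt_trans Ham Hmc.
rewrite app3B mulE_r ?lexx ?(ltW Hmc) // !app3_e3 !eqxx ?lexx ?(ltW Ham) ?(ltW Hmc) ?(ltW Hac) /= !andbT.
case: (eqVneq x3 c) => [E|N] /=; last by rewrite !andbF subrr eqxx.
subst x3; case: (eqVneq x2 c) => [E|N] /=.
  by subst x2; rewrite (ltW Hmc) lexx andbT /=; case: (x1 == a) => /=; rewrite subrr eqxx.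
rewrite andbF subr0; case: ifP => [/andP [Hmx2 _]|]; last by rewrite eqxx.
case: (eqVneq x1 a) => [E|] /=; last by rewrite eqxx.
move=> _; subst x1; split => //; apply/eqP => E; subst x2; move: (lt_le_trans Ham Hmx2); rewrite ltxx.
by [].
Qed.

End Infra.

Section LemG.
Variables (d1 d2 : Order.disp_t) (P1 : finPOrderType d1) (P2 : finPOrderType d2).
Variable (R : comNzRingType).
Variable F : I3 P1 R -> I3 P2 R.
Hypothesis Fadd : forall u v, F (u + v) = F u + F v.
Hypothesis FZ : forall (r : R) u, F (r *: u) = r *: F u.
Hypothesis Fmul : forall u v, F (mul3 u v) = mul3 (F u) (F v).
Variable g : P1 -> P2.
Hypothesis gsurj : forall q, exists z, g z = q.
Hypothesis Fdiag : forall z q, app3 (F (e3 R z z z)) q q q = (if q == g z then 1 else 0).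

Lemma F0 : F 0 = 0.
Proof. by rewrite -(scale0r (0 : I3 P1 R)) FZ scale0r. Qed.

Lemma FB (u v : I3 P1 R) : F (u - v) = F u - F v.
Proof. by rewrite Fadd -scaleN1r FZ scaleN1r. Qed.

Lemma Fsum (I : finType) (G : I -> I3 P1 R) : F (\sum_i G i) = \sum_i F (G i).
Proof. exact: (big_morph F Fadd F0). Qed.

Lemma LZ_span (h : I3 P1 R) : (forall t : chain3 P1, h t != 0 ->
   LZ (F (e3 R (val t).1.1 (val t).1.2 (val t).2))) -> LZ (F h).
Proof.
move=> H a b c Hl; rewrite (decomp h) Fsum app3_sum big1 // => t _.
rewrite FZ app3Z; case: (eqVneq (h t) 0) => [->|Ht]; first by rewrite mul0r.
by rewrite H // mulr0.
Qed.

Lemma G1 a b c : a != b -> b != c -> LZ (F (e3 R a b c)).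
Proof.
move=> Hab Hbc.
have HR : forall z, mul3 (F (e3 R a b c)) (F (e3 R z z z)) = 0.
  by move=> z; rewrite -Fmul e3_mul_zr // F0.
have HL : forall z, mul3 (F (e3 R z z z)) (F (e3 R a b c)) = 0.
  by move=> z; rewrite -Fmul e3_mul_zl // F0.
set X := F (e3 R a b c) in HR HL *.
have Hd : forall q, app3 X q q q = 0.
  move=> q; have [z <-] := gsurj q.
  by move: (congr1 (fun f => app3 f (g z) (g z) (g z)) (HL z)); rewrite /= M0 app30 Fdiag eqxx mul1r.
have Hu : forall z a' c', cover a' c' -> app3 (F (e3 R z z z)) a' a' c' * app3 X a' c' c' = 0.
  move=> z a' c' Hc.
  by move: (congr1 (fun f => app3 f a' c' c') (HL z)); rewrite /= M2 // app30 Hd mulr0 addr0.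
have Hxi : forall a' c', cover a' c' -> app3 X a' a' c' = 0.
  move=> a' c' Hc; have [z Ez] := gsurj a'.
  move: (congr1 (fun f => app3 f a' a' c') (HL z)); rewrite /= M1 // app30 Hu // addr0.
  by rewrite Fdiag -Ez eqxx mul1r.
have Heta : forall a' c', cover a' c' -> app3 X a' c' c' = 0.
  move=> a' c' Hc; have [z Ez] := gsurj c'.
  move: (congr1 (fun f => app3 f a' c' c') (HR z)); rewrite /= M2 // app30 Hxi // mul0r add0r.
  by rewrite Fdiag -Ez eqxx mulr1.
by move=> a' b' c' [[<- <-]|[Hc [->|->]]]; [apply: Hd|apply: Hxi|apply: Heta].
Qed.

Lemma LZB (u v : I3 P2 R) : LZ u -> LZ v -> LZ (u - v).
Proof. by move=> Hu Hv a b c Hl; rewrite app3B Hu // Hv // subrr. Qed.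

Lemma G2 a m c : (a < m)%O -> (m < c)%O -> LZ (F (e3 R a a c)).
Proof.
move=> Ham Hmc.
have -> : e3 R a a c = mul3 (e3 R a a m) (e3 R a m c) -
   (mul3 (e3 R a a m) (e3 R a m c) - e3 R a a c) by rewrite opprB addrC subrK.
rewrite FB; apply: LZB.
  by rewrite Fmul; apply: LZ_mulr; apply: G1; rewrite ?(lt_eqF Ham) ?(lt_eqF Hmc).
apply: LZ_span => -[[[x1 x2] x3] Hc] /= Ht; move: (Hc) => /andP [H1 H2].
rewrite -app3_val /= in Ht; have [N1 N2] := dec_l Ham Hmc H1 H2 Ht.
exact: G1.
Qed.

Lemma G3 a m c : (a < m)%O -> (m < c)%O -> LZ (F (e3 R a c c)).
Proof.
move=> Ham Hmc.
have -> : e3 R a c c = mul3 (e3 R a m c) (e3 R m c c) -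
   (mul3 (e3 R a m c) (e3 R m c c) - e3 R a c c) by rewrite opprB addrC subrK.
rewrite FB; apply: LZB.
  by rewrite Fmul; apply: LZ_mull; apply: G1; rewrite ?(lt_eqF Ham) ?(lt_eqF Hmc).
apply: LZ_span => -[[[x1 x2] x3] Hc] /= Ht; move: (Hc) => /andP [H1 H2].
rewrite -app3_val /= in Ht; have [N1 N2] := dec_r Ham Hmc H1 H2 Ht.
exact: G1.
Qed.

Lemma LemG (h : I3 P1 R) : LZ h -> LZ (F h).
Proof.
move=> Hh; apply: LZ_span => -[[[a b] c] Hc] /= Ht; move: (Hc) => /andP [H1 H2].
rewrite -app3_val /= in Ht.
have NL : ~ lowpos a b c by move=> L; move: Ht; rewrite Hh // eqxx.
case: (eqVneq a b) => [Eab|Nab]; case: (eqVneq b c) => [Ebc|Nbc].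
- by subst; case: NL; left.
- subst b; have Hlt : (a < c)%O by rewrite lt_neqAle Nbc H2.
  have : ~~ cover a c by apply/negP => Hcv; apply: NL; apply: lp_l.
  rewrite /cover Hlt /= => /forallPn [m]; rewrite negb_imply => /andP [/andP [Ham Hmc] /norP [Hma Hmc']].
  apply: (@G2 a m c); [by rewrite lt_def Hma Ham|by rewrite lt_def eq_sym Hmc' Hmc].
- subst b; have Hlt : (a < c)%O by rewrite lt_neqAle Nab H1.
  have : ~~ cover a c by apply/negP => Hcv; apply: NL; apply: lp_r.
  rewrite /cover Hlt /= => /forallPn [m]; rewrite negb_imply => /andP [/andP [Ham Hmc] /norP [Hma Hmc']].
  apply: (@G3 a m c); [by rewrite lt_def Hma Ham|by rewrite lt_def eq_sym Hmc' Hmc].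
- exact: G1.
Qed.

End LemG.

Section Basis.
Variables (d : Order.disp_t) (P : finPOrderType d) (R : comNzRingType).
Implicit Types (f g h : I3 P R) (a b c x y z q m p : P).

Lemma B1 x y : cover x y ->
  mul3 (e3 R x x y) (e3 R x y y) = e3 R x x y + e3 R x y y.
Proof.
move=> Hc; have Hxy := ltW (cover_lt Hc); have Nxy := lt_eqF (cover_lt Hc).
have Nyx : (y == x) = false by rewrite eq_sym.
apply: ext3 => x1 x2 x3 H1 H2; rewrite mulE_l ?lexx // app3D !app3_e3 ?eqxx ?lexx ?Hxy /= ?andbT.
case: (eqVneq x1 x) => [E1|N1] /=; last by rewrite addr0.
subst x1; case: (eqVneq x2 x) => [E2|N2].
  by subst x2; rewrite lexx Hxy Nxy /= addr0.
case: (eqVneq x2 y) => [E2|N2'].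
  by subst x2; rewrite lexx Hxy /= add0r.
rewrite /= add0r; case: ifP => // /andP [Ha Hb].
by case: (coverP Hc Ha Hb) => E; [move: N2|move: N2']; rewrite E eqxx.
Qed.

Lemma B2 x y : cover x y ->
  mul3 (e3 R x x x) (e3 R x x y + e3 R x y y) = e3 R x x y.
Proof.
move=> Hc; have Hxy := ltW (cover_lt Hc); have Nxy := lt_eqF (cover_lt Hc).
have Nyx : (y == x) = false by rewrite eq_sym.
apply: ext3 => x1 x2 x3 H1 H2; rewrite mulE_l ?lexx // app3D !app3_e3 ?eqxx ?lexx ?Hxy ?Nxy /= ?andbT ?addr0.
case: (eqVneq x1 x) => [E1|N1] /=; last by [].
subst x1; case: (eqVneq x2 x) => [E2|N2].
  by subst x2; rewrite lexx.
case: ifP => // /andP [Ha Hb]; case/eqP: N2; by apply/le_anti; rewrite Hb Ha.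
Qed.

Lemma B3 x y : cover x y ->
  mul3 (e3 R x x y + e3 R x y y) (e3 R y y y) = e3 R x y y.
Proof.
move=> Hc; have Hxy := ltW (cover_lt Hc); have Nxy := lt_eqF (cover_lt Hc).
have Nyx : (y == x) = false by rewrite eq_sym.
apply: ext3 => x1 x2 x3 H1 H2; rewrite mulE_r ?lexx // app3D !app3_e3 ?eqxx ?lexx ?Hxy ?Nyx /= ?andbT ?andbF ?add0r.
case: (eqVneq x3 y) => [E1|N1] /=; last by rewrite !andbF.
subst x3; rewrite andbT; case: (eqVneq x2 y) => [E2|N2].
  by subst x2; rewrite lexx /= andbT.
rewrite andbF; case: ifP => // /andP [Ha Hb]; case/eqP: N2; by apply/le_anti; rewrite Hb Ha.
Qed.

Lemma B4 x y : cover x y ->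
  mul3 (e3 R x x y + e3 R x y y) (e3 R x x y + e3 R x y y) = e3 R x x y + e3 R x y y.
Proof.
move=> Hc; have Hxy := ltW (cover_lt Hc); have Nxy := lt_eqF (cover_lt Hc).
have Nyx : (y == x) = false by rewrite eq_sym.
rewrite mul3Dl.
have -> : mul3 (e3 R x x y) (e3 R x x y + e3 R x y y) = e3 R x x y + e3 R x y y.
  rewrite -[RHS](B1 Hc); apply: ext3 => x1 x2 x3 H1 H2.
  rewrite (@mulE_l _ _ _ x x y (e3 R x x y + e3 R x y y)) ?lexx ?Hxy // mulE_l ?lexx ?Hxy //.
  by rewrite app3D app3_e3 Nyx /= !andbF add0r.
suff -> : mul3 (e3 R x y y) (e3 R x x y + e3 R x y y) = 0 by rewrite addr0.
apply: ext3 => x1 x2 x3 H1 H2.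
rewrite mulE_l ?lexx ?Hxy // app30 app3D !app3_e3 Nyx /=. by rewrite addr0; case: ifP.
Qed.

Lemma B5 z : mul3 (e3 R z z z) (e3 R z z z) = e3 R z z z.
Proof.
apply: ext3 => x1 x2 x3 H1 H2; rewrite mulE_l ?lexx // !app3_e3 !eqxx lexx /=.
case: (eqVneq x1 z) => [E|N] //=; subst x1.
case: (eqVneq x2 z) => [E|N]; first by subst x2; rewrite lexx.
by case: ifP => // /andP [Ha Hb]; case/eqP: N; by apply/le_anti; rewrite Hb Ha.
Qed.

Lemma B8 p h : mul3 (mul3 (e3 R p p p) h) (e3 R p p p) = app3 h p p p *: e3 R p p p.
Proof.
apply: ext3 => x1 x2 x3 H1 H2; rewrite mulE_r ?lexx // app3Z app3_e3 lexx /= !andbT.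
case: (eqVneq x3 p) => [E|N] /=; last by rewrite !andbF mulr0.
subst x3; case: (eqVneq x2 p) => [E|N]; last first.
  rewrite andbF mulr0; case: ifP => // /andP [Ha Hb]; case/eqP: N; by apply/le_anti; rewrite Hb Ha.
subst x2; rewrite lexx andbT mulE_l ?lexx //.
case: (eqVneq x1 p) => [E|N] /=; last by rewrite mulr0.
by rewrite mulr1.
Qed.

End Basis.

Unset Implicit Arguments.

Theorem lemma3p4 (dP dQ : Order.disp_t) (P : finPOrderType dP)
  (Q : finPOrderType dQ) (R : comNzRingType)
  (Hind : indecomposable R)
  (Phi : {linear I3 P R -> I3 Q R})
  (Phi_mul : forall f g : I3 P R, Phi (mul3 f g) = mul3 (Phi f) (Phi g))
  (Phi_bij : bijective Phi)
  (phi : P -> Q) (phi_bij : bijective phi)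
  (Hphi : forall x : P, J3 1 (Phi (e3 R x x x) - e3 R (phi x) (phi x) (phi x))) :
  forall x y : P, (x < y)%O -> lenP x y = 1%N ->
    (phi x < phi y)%O /\
    exists sigma : I3 Q R, J3 2 sigma /\
      Phi (e3 R x x y + e3 R x y y) =
      e3 R (phi x) (phi x) (phi y) + e3 R (phi x) (phi y) (phi y) + sigma.
Proof.
move=> x y Hxy Hl.
have Hcov := lenP_cover Hxy Hl.
have Nxy : (x == y) = false := lt_eqF Hxy.
case: Phi_bij => Psi HP1 HP2.
case: phi_bij => phii Hp1 Hp2.
have Ediag : forall z q, app3 (Phi (e3 R z z z)) q q q = if q == phi z then 1 else 0.
  move=> z q; have := J3P (Hphi z) (lexx q) (lexx q); rewrite lenP_refl => /(_ isT).
  rewrite app3B app3_e3 lexx /= andbT.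
  by case: (eqVneq q (phi z)) => [E|N] /=; move/eqP; rewrite subr_eq0 => /eqP.
have Psiadd : forall u v, Psi (u + v) = Psi u + Psi v.
  move=> u v; apply: (can_inj HP1); rewrite raddfD; rewrite HP2; congr (_ + _); exact: (esym (HP2 _)).
have PsiZ : forall (r : R) u, Psi (r *: u) = r *: Psi u.
  by move=> r u; apply: (can_inj HP1); rewrite HP2 linearZ /= HP2.
have Psimul : forall u v, Psi (mul3 u v) = mul3 (Psi u) (Psi v).
  by move=> u v; apply: (can_inj HP1); rewrite HP2 Phi_mul !HP2.
have gsurj : forall p : P, exists z : Q, phii z = p by move=> p; exists (phi p).
have Psidiag : forall z p, app3 (Psi (e3 R z z z)) p p p = if p == phii z then 1 else 0.
  move=> z p; have := B8 p (Psi (e3 R z z z)).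
  move/(congr1 Phi); rewrite !Phi_mul HP2 linearZ /=.
  move/(congr1 (fun f => app3 f (phi p) (phi p) (phi p))); rewrite /= !M0 app3Z Ediag eqxx.
  rewrite mulr1 mul1r app3_e3 lexx /= andbT mulr1 => <-.
  case: (eqVneq (phi p) z) => [<-|N] /=; first by rewrite Hp1 eqxx.
  case: (eqVneq p (phii z)) => [E|] //; by case/eqP: N; rewrite E Hp2.
have LG := LemG Psiadd PsiZ Psimul gsurj Psidiag.
set s := e3 R x x y + e3 R x y y.
set S := Phi s.
set A := Phi (e3 R x x y).
set B := Phi (e3 R x y y).
set Ex := Phi (e3 R x x x).
set Ey := Phi (e3 R y y y).
have RS : S = mul3 A B by rewrite -Phi_mul B1.
have RA : A = mul3 Ex S by rewrite -Phi_mul B2.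
have RB : B = mul3 S Ey by rewrite -Phi_mul B3.
have RSS : mul3 S S = S by rewrite -Phi_mul B4.
have RExx : mul3 Ex Ex = Ex by rewrite -Phi_mul B5.
have REyy : mul3 Ey Ey = Ey by rewrite -Phi_mul B5.
have RAEx : mul3 A Ex = 0 by rewrite -Phi_mul e3_mul_zr ?Nxy // raddf0.
have REyB : mul3 Ey B = 0 by rewrite -Phi_mul e3_mul_zl ?Nxy // raddf0.
have Nxy' : (phi x == phi y) = false.
  by apply/negbTE; apply: contraFN Nxy => /eqP /(can_inj Hp1) ->.
set x' := phi x in Nxy' *; set y' := phi y in Nxy' *.
have Exd : forall q, app3 Ex q q q = if q == x' then 1 else 0 by move=> q; apply: Ediag.
have Eyd : forall q, app3 Ey q q q = if q == y' then 1 else 0 by move=> q; apply: Ediag.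
have Sd : forall q, app3 S q q q = 0.
  move=> q; rewrite {1}RS M0 RA RB !M0 Exd Eyd.
  case: (eqVneq q x') => [->|]; last by rewrite !mul0r.
  by rewrite Nxy' !mulr0.
have Ad : forall q, app3 A q q q = 0 by move=> q; rewrite RA M0 Sd mulr0.
have Bd : forall q, app3 B q q q = 0 by move=> q; rewrite RB M0 Sd mul0r.
have Hww : forall c1 c2, cover c1 c2 -> app3 S c1 c1 c2 = app3 S c1 c2 c2.
  move=> c1 c2 Hc.
  have E1 := congr1 (fun f => app3 f c1 c1 c2) RSS.
  have E2 := congr1 (fun f => app3 f c1 c2 c2) RSS.
  move: E1 E2; rewrite /= M1 // M2 // !Sd mul0r mulr0 add0r addr0 => -> ->. done.
have Hw01 : forall c1 c2, cover c1 c2 -> app3 S c1 c1 c2 = 0 \/ app3 S c1 c1 c2 = 1.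
  move=> c1 c2 Hc; apply: Hind.
  have E1 := congr1 (fun f => app3 f c1 c1 c2) RSS.
  by move: E1; rewrite /= M1 // Sd mul0r add0r -(Hww _ _ Hc).
have Hw0 : forall c1 c2, cover c1 c2 -> (c1 != x') || (c2 != y') ->
     app3 S c1 c1 c2 = 0.
  move=> c1 c2 Hc /orP [N1|N2].
  - have HA : app3 A c1 c1 c2 = app3 Ex c1 c1 c2 * app3 S c1 c1 c2.
      by rewrite RA M1 // Exd (negbTE N1) mul0r add0r -(Hww _ _ Hc).
    have Huv : app3 Ex c1 c1 c2 * app3 Ex c1 c2 c2 = app3 Ex c1 c1 c2.
      by move: (congr1 (fun f => app3 f c1 c1 c2) RExx); rewrite /= M1 // Exd (negbTE N1) mul0r add0r.
    have Hz : app3 A c1 c1 c2 * app3 Ex c1 c2 c2 = 0.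
      by move: (congr1 (fun f => app3 f c1 c1 c2) RAEx); rewrite /= M1 // app30 Ad mul0r add0r.
    have HA0 : app3 A c1 c1 c2 = 0.
      by rewrite HA -Huv mulrAC -HA Hz.
    by rewrite {1}RS M1 // Ad HA0 !mul0r addr0.
  - have HB : app3 B c1 c2 c2 = app3 S c1 c1 c2 * app3 Ey c1 c2 c2.
      by rewrite RB M2 // Eyd (negbTE N2) mulr0 addr0.
    have Huv : app3 Ey c1 c1 c2 * app3 Ey c1 c2 c2 = app3 Ey c1 c2 c2.
      by move: (congr1 (fun f => app3 f c1 c2 c2) REyy); rewrite /= M2 // Eyd (negbTE N2) mulr0 addr0.
    have Hz : app3 Ey c1 c1 c2 * app3 B c1 c2 c2 = 0.
      by move: (congr1 (fun f => app3 f c1 c2 c2) REyB); rewrite /= M2 // app30 Bd mulr0 addr0.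
    have HB0 : app3 B c1 c2 c2 = 0.
      by rewrite HB -Huv mulrCA -HB Hz.
    by rewrite Hww // {1}RS M2 // Bd HB0 !mulr0 addr0.
have Key : cover x' y' && (app3 S x' x' y' == 1).
  apply/negPn/negP => NK.
  have LS : LZ S.
    move=> a b c [[<- <-]|[Hc Hb]]; first exact: Sd.
    have Hac0 : app3 S a a c = 0.
      case: (boolP ((a != x') || (c != y'))) => H; first exact: Hw0.
      move: H; rewrite negb_or !negbK => /andP [/eqP Ea /eqP Ec]; subst a c.
      case: (Hw01 _ _ Hc) => // E; case/negP: NK; by rewrite Hc E eqxx.
    by case: Hb => ->; rewrite -?Hww.
  have := LG _ LS; rewrite /S HP1 => Ls.
  have := Ls x x y (lp_l Hcov); rewrite /s app3D !app3_e3 !eqxx lexx (ltW Hxy) Nxy /= addr0.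
  by move/eqP; rewrite oner_eq0.
case/andP: Key => Hcov' /eqP Hw1.
split; first exact: cover_lt Hcov'.
exists (S - (e3 R x' x' y' + e3 R x' y' y')); split; last by rewrite addrC subrK.
apply: LZ_J3 => a b c [[<- <-]|[Hc Hb]].
  rewrite app3B app3D Sd !app3_e3.
  case: (eqVneq a x') => [->|_] /=; last by rewrite !add0r oppr0.
  by rewrite Nxy' /= !add0r oppr0.
have Hx'y' := ltW (cover_lt Hcov').
have Nyx' : (y' == x') = false by rewrite eq_sym.
rewrite app3B app3D !app3_e3 lexx Hx'y' /= !andbT.
case: (boolP ((a != x') || (c != y'))) => H.
  have Hw := Hw0 _ _ Hc H.
  have E : (a == x') && (c == y') = false by apply/negbTE; rewrite negb_and.
  case: Hb => ->.
    by rewrite Hw; move: E; case: (a == x'); case: (c == y') => //= _; rewrite ?andbF !add0r oppr0.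
  by rewrite -Hww // Hw; move: E; case: (a == x'); case: (c == y') => //= _; rewrite ?andbF !add0r oppr0.
move: H; rewrite negb_or !negbK => /andP [/eqP Ea /eqP Ec]; subst a c.
case: Hb => ->.
  by rewrite Hw1 !eqxx Nxy' /= addr0 subrr.
by rewrite -Hww // Hw1 !eqxx Nyx' lexx /= add0r subrr.
Qed.
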